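(* Let $\overline L\ge L^\star$. Suppose we are on an event on which (i) for every round $t$ and every instantiated task $i$ that has been evaluated at least once, the utility interval $[\underline u^{(i)}_t,\overline u^{(i)}_t]$ (the interval computed at the most recent evaluation of task $i$) contains $u^{(i)}(\overline y^{(i)}_{s^{(i)}_t})$, and (ii) $f^{\star(i)}-\overline y^{(i)}_s\le\epsilon^{f,(i)}_s$ for all instantiated tasks $i$ and all $s\ge1$. For every instantiated task $i\in\mathcal I_t$ with local counter $s=s^{(i)}_t\ge1$ define $$\underline U^{(i)}_t:=\underline u^{(i)}_t,\qquad \overline U^{(i)}_t:=\mathrm{clip}_{[0,1]}\big(\overline u^{(i)}_t+\overline L\,\epsilon^{f,(i)}_{s}\big),$$ and $[\underline U^{(i)}_t,\overline U^{(i)}_t]:=[0,1]$ if $s^{(i)}_t=0$. Then $\underline U^{(i)}_t\le U^{(i)}\le\overline U^{(i)}_t$ for all such $t,i$. Moreover, if the utility interval width satisfies $\overline u^{(i)}_t-\underline u^{(i)}_t\le c_u\overline L\,\epsilon^{f,(i)}_{s^{(i)}_t}$ for some $c_u>0$, then $w^{(i)}_t:=\overline U^{(i)}_t-\underline U^{(i)}_t\le(c_u+1)\overline L\,\epsilon^{f,(i)}_{s^{(i)}_t}$.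
   Context: Tasks are indexed by $i\in\mathbb N$; task $i$ has compact domain $\mathcal X^{(i)}\subset\mathbb R^{d^{(i)}}$ and unknown objective $f^{(i)}$, $f^{\star(i)}:=\max_xf^{(i)}(x)$. In each global round $t$ one task $i_t$ is selected and one design evaluated on it; $s^{(i)}_t$ is the number of rounds $\le t$ in which task $i$ was selected; the incumbent is $\overline y^{(i)}_s:=\max_{r\le s}f^{(i)}(x^{(i)}_r)$ where $x^{(i)}_r$ is the $r$-th design evaluated on task $i$. $\epsilon^{f,(i)}_s:=2\sqrt{C_\lambda\beta^{(i)}_s\gamma^{(i)}_s/s}$ is the GP-UCB optimization-gap bound ($C_\lambda>0$ constant, $\beta^{(i)}_s,\gamma^{(i)}_s>0$ GP-UCB exploration and information-gain terms). Utilities $u^{(i)}:\mathbb R\to[0,1]$ are monotone nondecreasing and $L^{(i)}$-Lipschitz, $L^\star:=\sup_iL^{(i)}<\infty$; $U^{(i)}:=u^{(i)}(f^{\star(i)})$. $\mathrm{clip}_{[0,1]}(v):=\min\{1,\max\{0,v\}\}$. $\mathcal I_t$ is the set of tasks instantiated by round $t$. *)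

(* Defs.v *)
From HB Require Import structures.
From mathcomp Require Import all_boot all_order all_algebra.
From mathcomp Require Import all_classical all_reals all_analysis.
Set Implicit Arguments. Unset Strict Implicit. Unset Printing Implicit Defensive.
Import Order.TTheory GRing.Theory Num.Theory.
Import numFieldNormedType.Exports.
Local Open Scope classical_set_scope.
Local Open Scope ring_scope.

Section Defs.
Variable R : realType.

Definition clip01 (v : R) : R := Num.min 1 (Num.max 0 v).

(* f^{*(i)} := max_{x in X^(i)} f^(i)(x) (as the supremum of the image; the
   statement assumes the maximum is attained) *)
Definition fstar (n : nat) (X : set 'rV[R]_n) (f : 'rV[R]_n -> R) : R :=
  sup [set f x | x in X].

Definition max_attained (n : nat) (X : set 'rV[R]_n) (f : 'rV[R]_n -> R) : Prop :=
  exists2 x0, X x0 & forall x, X x -> f x <= f x0.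

(* incumbent  ybar_s := max_{1 <= r <= s} f(x_r)  (meaningful for s >= 1) *)
Definition incumbent (n : nat) (f : 'rV[R]_n -> R) (x : nat -> 'rV[R]_n) (s : nat) : R :=
  \big[Num.max/f (x 1%N)]_(1 <= r < s.+1) f (x r).

Definition local_count (sel : nat -> nat) (i t : nat) : nat :=
  count (fun r => sel r == i) (iota 1 t).

(* GP-UCB optimisation-gap bound  eps_s = 2 sqrt(C_lambda beta_s gamma_s / s) *)
Definition eps_f (Clam : R) (beta gamma : nat -> R) (s : nat) : R :=
  2 * Num.sqrt (Clam * beta s * gamma s / s%:R).

Definition Lstar (L : nat -> R) : R := sup (range L).

Definition lipschitz_const (u : R -> R) (L : R) : Prop :=
  forall a b, `|u a - u b| <= L * `|a - b|.

Definition Ulo (s : nat) (ulo : R) : R := if s == 0%N then 0 else ulo.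
Definition Uhi (Lbar : R) (s : nat) (uhi epss : R) : R :=
  if s == 0%N then 1 else clip01 (uhi + Lbar * epss).

End Defs.

(* Main.v *)
Require Import Defs.
From HB Require Import structures.
From mathcomp Require Import all_boot all_order all_algebra.
From mathcomp Require Import all_classical all_reals all_analysis.
Import Order.TTheory GRing.Theory Num.Theory.
Import numFieldNormedType.Exports.
Local Open Scope classical_set_scope.
Local Open Scope ring_scope.
From mathcomp Require Import lra.

Theorem theorem4p3 (R : realType)
  (* task i: dimension d i, compact domain X i in R^(d i), objective f i *)
  (d : nat -> nat) (X : forall i, set 'rV[R]_(d i)) (f : forall i, 'rV[R]_(d i) -> R)
  (* x i r : r-th design evaluated on task i (r >= 1) *)
  (x : forall i, nat -> 'rV[R]_(d i))
  (* sel t : task selected in global round t (t >= 1) *)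
  (sel : nat -> nat)
  (* I t : tasks instantiated by round t *)
  (I : nat -> set nat)
  (* GP-UCB constants *)
  (Clam : R) (beta gamma : nat -> nat -> R)
  (* utilities and Lipschitz constants *)
  (u : nat -> R -> R) (L : nat -> R) (Lbar : R)
  (* utility intervals computed at the most recent evaluation of task i *)
  (ulo uhi : nat -> nat -> R) :
  (forall i, compact (X i) /\ X i !=set0) ->
  (forall i, max_attained (X i) (f i)) ->
  (forall i r, (1 <= r)%N -> X i (x i r)) ->
  0 < Clam ->
  (forall i s, 0 < beta i s) -> (forall i s, 0 < gamma i s) ->
  (forall i v, 0 <= u i v <= 1) ->
  (forall i, {homo u i : a b / a <= b}) ->
  (forall i, lipschitz_const (u i) (L i)) ->
  has_ubound (range L) ->
  Lstar L <= Lbar ->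
  (* event (i) *)
  (forall t i, I t i -> (1 <= local_count sel i t)%N ->
     ulo i t <= u i (incumbent (f i) (x i) (local_count sel i t)) <= uhi i t) ->
  (* event (ii) *)
  (forall t i s, I t i -> (1 <= s)%N ->
     fstar (X i) (f i) - incumbent (f i) (x i) s <= eps_f Clam (beta i) (gamma i) s) ->
  (forall t i, I t i ->
     Ulo (local_count sel i t) (ulo i t) <= u i (fstar (X i) (f i))
     <= Uhi Lbar (local_count sel i t) (uhi i t)
          (eps_f Clam (beta i) (gamma i) (local_count sel i t)))
  /\
  (forall cu : R, 0 < cu -> forall t i, I t i -> (1 <= local_count sel i t)%N ->
     uhi i t - ulo i t <= cu * Lbar * eps_f Clam (beta i) (gamma i) (local_count sel i t) ->
     Uhi Lbar (local_count sel i t) (uhi i t)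
          (eps_f Clam (beta i) (gamma i) (local_count sel i t))
     - Ulo (local_count sel i t) (ulo i t)
     <= (cu + 1) * Lbar * eps_f Clam (beta i) (gamma i) (local_count sel i t)).
Proof.
move=> _ Hmax HX _ _ _ Hu01 Hmono Hlip HubL HLbar Hev1 Hev2.
have Lge0 : forall i, 0 <= L i.
  move=> i; have := Hlip i 1 0; rewrite subr0 normr1 mulr1.
  by apply: le_trans; rewrite normr_ge0.
have LleLbar : forall i, L i <= Lbar.
  move=> i; apply: le_trans HLbar; apply: sup_upper_bound; last by exists i.
  by split => //; exists (L 0%N), 0%N.
have Lbar0 : 0 <= Lbar by apply: le_trans (Lge0 0%N) (LleLbar 0%N).
have eps0 : forall i s, 0 <= eps_f Clam (beta i) (gamma i) s.
  by move=> i s; rewrite /eps_f mulr_ge0 // sqrtr_ge0.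
have fle : forall i y, X i y -> f i y <= fstar (X i) (f i).
  move=> i y Xy; apply: sup_upper_bound; last by exists y.
  split; first by exists (f i y), y.
  case: (Hmax i) => x0 _ Hx0; exists (f i x0) => _ [z Xz <-]; exact: Hx0.
have incle : forall i s, incumbent (f i) (x i) s <= fstar (X i) (f i).
  move=> i s; rewrite /incumbent big_nat_cond; apply: (big_ind (fun y => y <= fstar (X i) (f i))).
  - exact/fle/HX.
  - by move=> a b Ha Hb; rewrite ge_max Ha Hb.
  - by move=> r /andP[/andP[r1 _] _]; apply/fle/HX.
have Hcore : forall t i, I t i -> (1 <= local_count sel i t)%N ->
   u i (fstar (X i) (f i)) <= uhi i t + Lbar * eps_f Clam (beta i) (gamma i) (local_count sel i t).
  move=> t i It s1.
  have /andP[_ h2] := Hev1 t i It s1.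
  have h3 := Hev2 t i (local_count sel i t) It s1.
  have h4 := incle i (local_count sel i t).
  have h5 := Hlip i (fstar (X i) (f i)) (incumbent (f i) (x i) (local_count sel i t)).
  rewrite [X in L i * X]ger0_norm ?subr_ge0 // in h5.
  have h6 : L i * (fstar (X i) (f i) - incumbent (f i) (x i) (local_count sel i t)) <= Lbar * eps_f Clam (beta i) (gamma i) (local_count sel i t).
    by apply: ler_pM; rewrite ?Lge0 ?LleLbar ?subr_ge0.
  have h7 := ler_norm (u i (fstar (X i) (f i)) - u i (incumbent (f i) (x i) (local_count sel i t))).
  lra.
split.
  move=> t i It; rewrite /Ulo /Uhi.
  have [s0|s0] := eqVneq (local_count sel i t) 0%N.
    by have := Hu01 i (fstar (X i) (f i)).
  idtac.
  have s1 : (1 <= local_count sel i t)%N by rewrite lt0n.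
  have /andP[h1 _] := Hev1 t i It s1.
  have h := Hcore t i It s1.
  have /andP[u0 u1] := Hu01 i (fstar (X i) (f i)).
  rewrite (le_trans h1 (Hmono _ _ _ (incle _ _))) /=.
  rewrite /clip01 le_min u1 /= le_max h orbT //.
move=> cu cu0 t i It s1 Hw; rewrite /Ulo /Uhi.
have -> : (local_count sel i t == 0%N) = false by case: (local_count sel i t) s1.
have /andP[_ h2] := Hev1 t i It s1.
have /andP[u0 _] := Hu01 i (incumbent (f i) (x i) (local_count sel i t)).
have e0 := eps0 i (local_count sel i t).
have hv : 0 <= uhi i t + Lbar * eps_f Clam (beta i) (gamma i) (local_count sel i t).
  by apply: addr_ge0; [apply: le_trans u0 h2 | apply: mulr_ge0].
have hc : clip01 (uhi i t + Lbar * eps_f Clam (beta i) (gamma i) (local_count sel i t))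
   <= uhi i t + Lbar * eps_f Clam (beta i) (gamma i) (local_count sel i t).
  by rewrite /clip01 (max_idPr hv) ge_min lexx orbT.
move: hc Hw.
set C := clip01 _; set E := eps_f _ _ _ _.
move=> hc Hw; apply: (le_trans (lerB hc (lexx (ulo i t)))).
rewrite mulrDl mul1r mulrDl addrAC.
by rewrite lerD2r.
Qed.
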